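(* Let $K=3$ and let $l\ge m\ge 2$ be integers. Then \[ h(l,\,m,\,0)\ \le\ h(l-1,\,m-1,\,2). \]
   Context: For a vector $\vec n=(n_1,n_2,n_3)$ of nonnegative integers, the following random process is run: stocks start at $\vec n^{(0)}=\vec n$; at each step $t=1,2,\dots$, as long as at least two coordinates of $\vec n^{(t-1)}$ are nonzero, an index $i$ is chosen uniformly at random (independently of the past) among the indices with $n_i^{(t-1)}>0$, and $\vec n^{(t)}=\vec n^{(t-1)}-\vec e_i$ ($\vec e_i$ the $i$-th standard unit vector). The process stops at the first time $T$ at which at most one coordinate is nonzero, and $h(\vec n)=\mathbb{E}[T]$. Equivalently, with $\operatorname{support}(\vec n)=\{i:n_i\ne 0\}$: $h(\vec n)=0$ if $|\operatorname{support}(\vec n)|\le1$, and otherwise $h(\vec n)=1+\frac{1}{|\operatorname{support}(\vec n)|}\sum_{i\in\operatorname{support}(\vec n)}h(\vec n-\vec e_i)$. *)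

(* Defs.v *)
From mathcomp Require Import all_boot all_order all_algebra.
Set Implicit Arguments. Unset Strict Implicit. Unset Printing Implicit Defensive.
Import Order.TTheory GRing.Theory Num.Theory.
Local Open Scope ring_scope.


Definition supp_size (n1 n2 n3 : nat) : nat :=
  ((n1 != 0%N) + (n2 != 0%N) + (n3 != 0%N))%N.

(* fuel-based version of the recursion
   h(n) = 0 if |supp n| <= 1,
   h(n) = 1 + 1/|supp n| * sum_{i in supp n} h(n - e_i) otherwise.
   Each step lowers n1+n2+n3 by one, so fuel n1+n2+n3 suffices. *)
Fixpoint hfuel (fuel : nat) (n1 n2 n3 : nat) : rat :=
  match fuel with
  | 0%N => 0
  | k.+1 =>
    if (supp_size n1 n2 n3 <= 1)%N then 0
    else 1 + (supp_size n1 n2 n3)%:R^-1 *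
             ( (if n1 == 0%N then 0 else hfuel k n1.-1 n2 n3)
             + (if n2 == 0%N then 0 else hfuel k n1 n2.-1 n3)
             + (if n3 == 0%N then 0 else hfuel k n1 n2 n3.-1))
  end.

(* h(n) = E[T] for the stock process with K = 3 *)
Definition h (n1 n2 n3 : nat) : rat := hfuel (n1 + n2 + n3) n1 n2 n3.

(* Main.v *)
Require Import Defs.
From mathcomp Require Import all_boot all_order all_algebra.
From mathcomp Require Import zify ring lra.
Import Order.TTheory GRing.Theory Num.Theory.
Local Open Scope ring_scope.

Lemma hfuel_eq k1 k2 n1 n2 n3 : (n1+n2+n3 <= k1)%N -> (n1+n2+n3 <= k2)%N ->
  hfuel k1 n1 n2 n3 = hfuel k2 n1 n2 n3.
Proof.
elim: k1 k2 n1 n2 n3 => [|k1 IH] [|k2] n1 n2 n3 H1 H2 //.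
- have -> : n1 = 0%N by lia. have -> : n2 = 0%N by lia. have -> : n3 = 0%N by lia. by [].
- have -> : n1 = 0%N by lia. have -> : n2 = 0%N by lia. have -> : n3 = 0%N by lia. by [].
rewrite /=; case: ifP => // _.
congr (1 + _ * (_ + _ + _)).
- case: (n1 =P 0%N) => // ?; apply: IH; lia.
- case: (n2 =P 0%N) => // ?; apply: IH; lia.
- case: (n3 =P 0%N) => // ?; apply: IH; lia.
Qed.

Lemma h_small n1 n2 n3 : (supp_size n1 n2 n3 <= 1)%N -> h n1 n2 n3 = 0.
Proof. by rewrite /h; case: (n1+n2+n3)%N => //= k ->. Qed.

Lemma h_unfold n1 n2 n3 : (1 < supp_size n1 n2 n3)%N -> h n1 n2 n3 =
  1 + (supp_size n1 n2 n3)%:R^-1 *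
             ( (if n1 == 0%N then 0 else h n1.-1 n2 n3)
             + (if n2 == 0%N then 0 else h n1 n2.-1 n3)
             + (if n3 == 0%N then 0 else h n1 n2 n3.-1)).
Proof.
move=> H; rewrite /h; case E: (n1+n2+n3)%N => [|k].
  have E1 : n1 = 0%N by lia. have E2 : n2 = 0%N by lia. have E3 : n3 = 0%N by lia.
  by move: H; rewrite E1 E2 E3.
rewrite /= leqNgt H /=.
congr (1 + _ * (_ + _ + _)).
- case: (n1 =P 0%N) => // ?; apply: hfuel_eq; lia.
- case: (n2 =P 0%N) => // ?; apply: hfuel_eq; lia.
- case: (n3 =P 0%N) => // ?; apply: hfuel_eq; lia.
Qed.

Lemma h3 a b c : h a.+1 b.+1 c.+1 =
  1 + 3%:R^-1 * (h a b.+1 c.+1 + h a.+1 b c.+1 + h a.+1 b.+1 c).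
Proof. by rewrite h_unfold. Qed.
Lemma hab0 a b : h a.+1 b.+1 0 = 1 + 2%:R^-1 * (h a b.+1 0 + h a.+1 b 0).
Proof. by rewrite h_unfold //= addr0. Qed.
Lemma h0bc b c : h 0 b.+1 c.+1 = 1 + 2%:R^-1 * (h 0 b c.+1 + h 0 b.+1 c).
Proof. by rewrite h_unfold //= add0r. Qed.
Lemma ha0c a c : h a.+1 0 c.+1 = 1 + 2%:R^-1 * (h a 0 c.+1 + h a.+1 0 c).
Proof. by rewrite h_unfold //= addr0. Qed.
Lemma ha00 a : h a 0 0 = 0. Proof. by apply: h_small; case: a. Qed.
Lemma h0b0 b : h 0 b 0 = 0. Proof. by apply: h_small; case: b. Qed.
Lemma h00c c : h 0 0 c = 0. Proof. by apply: h_small; case: c. Qed.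

Lemma hfuel_ge0 k n1 n2 n3 : 0 <= hfuel k n1 n2 n3.
Proof.
elim: k n1 n2 n3 => //= k IH n1 n2 n3; case: ifP => // _.
apply: addr_ge0 => //; apply: mulr_ge0; first by rewrite invr_ge0 ler0n.
by apply: addr_ge0; [apply: addr_ge0|]; case: eqP.
Qed.
Lemma h_ge0 a b c : 0 <= h a b c. Proof. exact: hfuel_ge0. Qed.

Lemma S1 b c : h 0 b c = h b c 0.
Proof.
elim: b c => [|b IHb] c; first by rewrite h00c h0b0.
elim: c => [|c IHc]; first by rewrite h0b0 ha00.
by rewrite h0bc hab0 IHb IHc.
Qed.
Lemma S2 a c : h a 0 c = h a c 0.
Proof.
elim: a c => [|a IHa] c; first by rewrite h00c h0b0.
elim: c => [|c IHc]; first by [].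
by rewrite ha0c hab0 IHa IHc.
Qed.
Lemma S3 a b : h a b 0 = h b a 0.
Proof.
elim: a b => [|a IHa] b; first by rewrite h0b0 ha00.
elim: b => [|b IHb]; first by rewrite h0b0 ha00.
rewrite !hab0 (IHa b.+1) IHb; congr (_ + _ * _); exact: addrC.
Qed.

Lemma g1 n : h 1 n 0 <= 2.
Proof.
elim: n => [|n IH]; first by rewrite ha00.
rewrite hab0 h0b0; lra.
Qed.

Lemma LA a b : h a.+1 b.+1 0 <= h a b 0 + 2.
Proof.
elim: a b => [|a IHa] b; first by rewrite h0b0 add0r g1.
elim: b => [|b IHb]; first by rewrite ha00 add0r S3 g1.
rewrite (hab0 a.+1 b.+1) (hab0 a b).
have := IHa b.+1; have := IHb; lra.
Qed.

Lemma LC a b : h a.+1 b.+1 0 <= h a b 1 + 1.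
Proof.
elim: a b => [|a IHa] b.
  rewrite S1 (S3 b 1) (hab0 0 b) h0b0; have := h_ge0 1 b 0; lra.
elim: b => [|b IHb].
  rewrite S2 (hab0 a.+1 0) ha00; have := h_ge0 a.+1 1 0; lra.
rewrite (h3 a b 0) (hab0 a.+1 b.+1).
have := IHa b.+1; have := IHb; have := LA a.+1 b.+1; rewrite (hab0 a.+1 b.+1); lra.
Qed.

Lemma Bb b : h 1 b.+2 0 <= h 0 b.+1 2.
Proof. rewrite S1 (S3 b.+1 2) (hab0 1 b) (hab0 0 b.+1) h0b0; have := h_ge0 2 b 0; lra. Qed.
Lemma Ba a : h a.+2 1 0 <= h a.+1 0 2.
Proof. rewrite S2 (hab0 a 1) (hab0 a.+1 0) ha00; have := h_ge0 a 2 0; lra. Qed.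

Lemma step a b : h a.+1 b.+2 0 <= h a b.+1 2 -> h a.+2 b.+1 0 <= h a.+1 b 2 ->
  h a.+2 b.+2 0 <= h a.+1 b.+1 2.
Proof.
move=> H1 H2; rewrite (h3 a b 1).
have := LC a.+1 b.+1; rewrite (hab0 a.+1 b.+1); lra.
Qed.

Lemma M a b : h a.+2 b.+2 0 <= h a.+1 b.+1 2.
Proof.
elim: a b => [|a IHa] b.
  elim: b => [|b IHb]; first exact: step (Bb 0) (Ba 0).
  exact: step (Bb b.+1) IHb.
elim: b => [|b IHb]; first exact: step (IHa 0) (Ba a.+1).
exact: step (IHa b.+1) IHb.
Qed.

Theorem lemma6 (l m : nat) (hm : (2 <= m)%N) (hlm : (m <= l)%N) :
  h l m 0 <= h l.-1 m.-1 2.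
Proof.
case: l m hm hlm => [|[|a]] [|[|b]] //= _ _; exact: M.
Qed.
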